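(* Let $t\ge 2$. Let $G$ be a stitched 2-ichromatic ordered graph with vertices $v_1<\dots<v_{m+n}$ whose parts are $\{v_1,\ldots,v_m\}$ and $\{v_{m+1},\ldots,v_{m+n}\}$. If $v_1v_{m+n}$ and $v_mv_{m+1}$ are edges of $G$, then $R_t(G)\ge (2t+1)r+1$, where $r=\min(m,n)-1$.
   Context: An ordered graph is a graph together with a specified linear ordering of its vertex set. An ordered graph $G$ is contained in an ordered graph $H$ if there is an order-preserving injection $V(G)\to V(H)$ mapping edges to edges. An interval coloring of an ordered graph is a partition of its vertex set into independent sets each consisting of consecutive vertices (called parts); an ordered graph is 2-ichromatic if its minimum number of parts in an interval coloring is 2. A 2-ichromatic ordered graph is stitched if the four vertices consisting of the first and last vertex of each of the two parts lie in a single connected component. $R_t(G)$ is the minimum $N$ such that every coloring of the edges of the ordered complete graph on $N$ vertices with $t$ colors contains a monochromatic copy of $G$. *)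

(* Defs.v *)
From mathcomp Require Import all_boot.
Set Implicit Arguments. Unset Strict Implicit. Unset Printing Implicit Defensive.

Definition is_ograph (N : nat) (E : rel 'I_N) : Prop :=
  symmetric E /\ irreflexive E.

(* An interval coloring with k parts: a surjective nondecreasing map to 'I_k
   (so each part is a nonempty set of consecutive vertices) whose parts are
   independent sets. *)
Definition interval_coloring (N k : nat) (E : rel 'I_N) (col : 'I_N -> 'I_k) : Prop :=
  [/\ (forall x y : 'I_N, x <= y -> col x <= col y),
      (forall j : 'I_k, exists x, col x = j)
    & (forall x y : 'I_N, E x y -> col x != col y)].

Definition interval_colorable (N k : nat) (E : rel 'I_N) : Prop :=
  exists col : 'I_N -> 'I_k, interval_coloring E col.

Definition two_ichromatic (N : nat) (E : rel 'I_N) : Prop :=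
  interval_colorable 2 E /\ (forall k, interval_colorable k E -> 2 <= k).

(* The parts of the (2-part) interval coloring are {v_1..v_m} and {v_(m+1)..v_N}
   (0-indexed: [0,m) and [m,N)). *)
Definition has_parts_split (N : nat) (E : rel 'I_N) (m : nat) : Prop :=
  exists col : 'I_N -> 'I_2,
    interval_coloring E col /\ (forall x : 'I_N, (val (col x) == 0) = (val x < m)).

(* Stitched (w.r.t. the parts [0,m) and [m,N)): the first and last vertices of
   each part, i.e. 0, m-1, m, N-1, lie in one connected component. *)
Definition stitched (N : nat) (E : rel 'I_N) (m : nat) : Prop :=
  forall x y : 'I_N,
    val x \in [:: 0; m.-1; m; N.-1] -> val y \in [:: 0; m.-1; m; N.-1] ->
    connect E x y.

Definition ocontains (N M : nat) (E : rel 'I_N) (H : rel 'I_M) : Prop :=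
  exists f : 'I_N -> 'I_M,
    (forall x y : 'I_N, x < y -> f x < f y) /\
    (forall x y : 'I_N, E x y -> H (f x) (f y)).

(* The graph of edges of colour a in a t-colouring c of the edges of the
   ordered complete graph K_M; edge {x,y} with x<y has colour c x y. *)
Definition color_class (M t : nat) (c : 'I_M -> 'I_M -> 'I_t) (a : 'I_t) : rel 'I_M :=
  fun x y => if x < y then c x y == a else if y < x then c y x == a else false.

Definition ramsey_prop (t N : nat) (E : rel 'I_N) (M : nat) : Prop :=
  forall c : 'I_M -> 'I_M -> 'I_t, exists a : 'I_t, ocontains E (color_class c a).

(* Main.v *)
Require Import Defs.
From mathcomp Require Import all_boot.
From mathcomp Require Import zify.

Definition colb (tp i j : nat) : nat :=
  if minn i (2*tp+4 - j) < tp then minn i (2*tp+4 - j)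
  else if ((i == tp) && (j == tp+4)) || ((tp < i) && (j < tp+4) && (j <= i+1)) then tp else tp.+1.

Lemma colb_key tp i1 i2 i3 i4 : i1 < i2 -> i2 <= i3 -> i3 < i4 -> i4 <= 2*tp+4 ->
  colb tp i1 i4 = colb tp i2 i3 -> [/\ colb tp i1 i4 = tp, i1 = tp & i4 = tp+4].
Proof. rewrite /colb; repeat case: ifP; move=> *; do ?split; lia. Qed.

Lemma colb_S tp i j : i <= j -> j <= 2*tp+4 -> colb tp i j = tp ->
  ((i == tp) || (i == tp+4)) = ((j == tp) || (j == tp+4)).
Proof. rewrite /colb; repeat case: ifP; move=> *; lia. Qed.

Lemma colb_lt tp i j : colb tp i j < tp.+2.
Proof. rewrite /colb; repeat case: ifP; move=> *; lia. Qed.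

Lemma div_lt r a b : 0 < r -> a + r <= b -> a %/ r < b %/ r.
Proof.
move=> r0 h; rewrite leq_divRL // mulSn.
have := leq_divM a r; lia.
Qed.

Theorem corollary5p1 (t m n : nat) (E : rel 'I_(m + n)) :
  2 <= t ->
  is_ograph E ->
  two_ichromatic E ->
  has_parts_split E m ->
  stitched E m ->
  (forall x y : 'I_(m + n), val x = 0 -> val y = (m + n).-1 -> E x y) ->
  (forall x y : 'I_(m + n), val x = m.-1 -> val y = m -> E x y) ->
  forall M : nat, ramsey_prop t E M ->
    (2 * t + 1) * (minn m n).-1 + 1 <= M.
Proof.
case: t => [|[|tp]] // _ _ [[col0 [_ surj0 _]] _] _ stitch e1 e2 M ram.
set r := (minn m n).-1.
have [r0|rpos] := posnP r.
  rewrite r0 muln0 add0n; case: M ram => // ram.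
  have [a [f _]] := ram (fun _ _ => ord0).
  have [x _] := surj0 ord0.
  by case: (f x).
rewrite leqNgt; apply/negP => HM.
have e5 : 2 * tp.+2 + 1 = (2*tp+4).+1 by lia.
rewrite e5 in HM.
have hm : 2 <= m by rewrite /r in rpos; lia.
have hn : 2 <= n by rewrite /r in rpos; lia.
pose beta (x : 'I_M) := (x : nat) %/ r.
have betalt : forall x : 'I_M, beta x <= 2 * tp + 4.
  move=> x; rewrite /beta -ltnS ltn_divLR //; have := ltn_ord x; lia.
pose cc (x y : 'I_M) : 'I_tp.+2 := inord (colb tp (beta x) (beta y)).
have [a [f [fmono fedge]]] := ram cc.
have dist : forall k (x y : 'I_(m+n)), (y : nat) = x + k -> (f x : nat) + k <= f y.
  elim=> [|k IH] x y hy.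
    by rewrite addn0; have -> : x = y by apply: ord_inj; rewrite hy addn0.
  have hlt : (x : nat) + k < m + n by have := ltn_ord y; lia.
  have := IH x (Ordinal hlt) erefl.
  have := fmono (Ordinal hlt) y ltac:(rewrite /= hy; lia).
  lia.
have ccE : forall x y : 'I_M, x < y -> color_class cc a x y ->
    colb tp (beta x) (beta y) = (a : nat).
  move=> x y lt; rewrite /color_class lt => /eqP <-.
  by rewrite inordK // colb_lt.
have mono_b : forall x y : 'I_M, x < y -> beta x <= beta y.
  by move=> x y /ltnW; apply: leq_div2r.
have o0 : 0 < m + n by lia.
have oq : m.-1 < m + n by lia.
have ou : m < m + n by lia.
have ow : (m + n).-1 < m + n by lia.
pose v0 := Ordinal o0; pose vq := Ordinal oq; pose vu := Ordinal ou; pose vw := Ordinal ow.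
have h04 : f v0 < f vw by apply: fmono => /=; lia.
have hqu : f vq < f vu by apply: fmono => /=; lia.
have c1 := ccE _ _ h04 (fedge _ _ (e1 v0 vw erefl erefl)).
have c2 := ccE _ _ hqu (fedge _ _ (e2 vq vu erefl erefl)).
have b12 : beta (f v0) < beta (f vq).
  apply: div_lt => //; have := dist (m.-1) v0 vq ltac:(rewrite /=; lia).
  rewrite /r; lia.
have b34 : beta (f vu) < beta (f vw).
  apply: div_lt => //; have := dist (n.-1) vu vw ltac:(rewrite /=; lia).
  rewrite /r; lia.
have b23 := mono_b _ _ hqu.
have [ca i1 i4] := @colb_key tp _ _ _ _ b12 b23 b34 (betalt _) (etrans c1 (esym c2)).
pose P : pred 'I_(m+n) := [pred v | (beta (f v) == tp) || (beta (f v) == tp + 4)].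
have clP : closed E P.
  move=> x y exy; have := fedge _ _ exy; rewrite !inE.
  case: (ltngtP (f x) (f y)) => hxy.
  - move=> /(ccE _ _ hxy); rewrite -c1 ca => h.
    exact: @colb_S tp _ _ (mono_b _ _ hxy) (betalt _) h.
  - have : color_class cc a (f y) (f x).
      move: (fedge _ _ exy); rewrite /color_class.
      by rewrite hxy ltnNge (ltnW hxy).
    move=> /(ccE _ _ hxy); rewrite -c1 ca => h _.
    exact/esym/(@colb_S tp _ _ (mono_b _ _ hxy) (betalt _) h).
  - by rewrite /color_class hxy ltnn.
have con : connect E v0 vq by apply: stitch; rewrite !inE eqxx ?orbT.
have := closed_connect clP con.
rewrite !inE i1 eqxx /=.
have : tp < beta (f vq) < tp + 4 by lia.
move=> hb.
move=> h; lia.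
Qed.
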